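(* If $X\ge0$ almost surely and $X$ is non-degenerate, then $X\notin\mathcal{D}^+$.
   Context: For real random variables, $X \le_{st} Y$ means $P(X\le t)\ge P(Y\le t)$ for all $t\in\mathbb{R}$. A real random variable $X$ (equivalently its distribution function $F_X$) belongs to $\mathcal{D}^+$ if for every $n\in\mathbb{N}$, all $\theta_1,\dots,\theta_n\ge 0$ with $\sum_{i=1}^n\theta_i=1$, and i.i.d. random variables $X_1,\dots,X_n$ with distribution $F_X$, we have $\sum_{i=1}^n\theta_iX_i\le_{st}X_1$. *)

(* Defs.v *)
From HB Require Import structures.
From mathcomp Require Import all_boot all_order all_algebra.
From mathcomp Require Import all_classical all_reals all_analysis.
Set Implicit Arguments. Unset Strict Implicit. Unset Printing Implicit Defensive.
Import Order.TTheory GRing.Theory Num.Theory.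
Local Open Scope classical_set_scope.
Local Open Scope ring_scope.

Definition mutually_independent (R : realType) (d : measure_display)
    (T : measurableType d) (Q : probability T R) (m : nat)
    (Y : 'I_m -> {RV Q >-> R}) : Prop :=
  forall B : 'I_m -> set R, (forall i, measurable (B i)) ->
    Q (\bigcap_i (Y i @^-1` B i)) = (\prod_i Q (Y i @^-1` B i))%E.

Definition same_distribution (R : realType)
    (d1 : measure_display) (T1 : measurableType d1) (P1 : probability T1 R)
    (X : {RV P1 >-> R})
    (d2 : measure_display) (T2 : measurableType d2) (P2 : probability T2 R)
    (Y : {RV P2 >-> R}) : Prop :=
  forall A : set R, measurable A -> P2 (Y @^-1` A) = P1 (X @^-1` A).

Definition stoch_le (R : realType)
    (d1 : measure_display) (T1 : measurableType d1) (P1 : probability T1 R)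
    (U : T1 -> R)
    (d2 : measure_display) (T2 : measurableType d2) (P2 : probability T2 R)
    (V : T2 -> R) : Prop :=
  forall t : R, (P2 (V @^-1` `]-oo, t]) <= P1 (U @^-1` `]-oo, t]))%E.

(* X (i.e. its distribution) belongs to D^+ : for every n >= 1 (indices
   'I_n.+1), all weights theta >= 0 summing to 1 and all i.i.d. copies
   X_1, ..., X_n of X on any probability space, sum theta_i X_i <=st X_1. *)
Definition in_Dplus (R : realType) (d : measure_display) (T : measurableType d)
    (P : probability T R) (X : {RV P >-> R}) : Prop :=
  forall (n : nat) (theta : 'I_n.+1 -> R),
    (forall i, 0 <= theta i) -> \sum_i theta i = 1 ->
  forall (d' : measure_display) (T' : measurableType d') (Q : probability T' R)
         (Y : 'I_n.+1 -> {RV Q >-> R}),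
    mutually_independent Y ->
    (forall i, same_distribution X (Y i)) ->
    stoch_le Q (fun w => \sum_i theta i * Y i w) Q (Y ord0).

Definition degenerate (R : realType) (d : measure_display) (T : measurableType d)
    (P : probability T R) (X : {RV P >-> R}) : Prop :=
  exists c : R, P (X @^-1` [set c]) = 1%E.

(* Main.v *)
Require Import Defs.
From HB Require Import structures.
From mathcomp Require Import all_boot all_order all_algebra.
From mathcomp Require Import all_classical all_reals all_analysis.
Set Implicit Arguments. Unset Strict Implicit. Unset Printing Implicit Defensive.
Import Order.TTheory GRing.Theory Num.Theory.
Import numFieldNormedType.Exports.
Local Open Scope classical_set_scope.
Local Open Scope ring_scope.
From mathcomp Require Import ring lra measurable_realfun.

Lemma iter_dbl (R : realType) (phi : R -> R) :
  (forall l, 0 < l -> 0 <= phi l) ->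
  (forall l, 0 < l -> phi l <= phi (l / 2) ^+ 2) ->
  forall k l, 0 < l -> phi l <= phi (l / 2 ^+ k) ^+ (2 ^ k).
Proof.
move=> h0 hd; elim=> [|k IH] l l0; first by rewrite expr0 divr1 expn0 expr1.
apply: (le_trans (IH l l0)).
have lk : 0 < l / 2 ^+ k by rewrite divr_gt0 // exprn_gt0.
rewrite expnS exprM [2 ^+ k.+1]exprSr invfM mulrA.
by rewrite lerXn2r ?nnegrE ?h0 ?hd // exprn_ge0 // h0 // divr_gt0.
Qed.

Lemma one_sub_expN (R : realType) (y : R) : 0 <= y -> y / (1 + y) <= 1 - expR (- y).
Proof.
move=> y0.
have h1 : 0 < 1 + y by lra.
have : expR (- y) <= (1 + y)^-1.
  by rewrite expRN lef_pV2 ?posrE ?expR_gt0 // expR_ge1Dx.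
have -> : y / (1 + y) = 1 - (1 + y)^-1.
  by apply: (mulIf (lt0r_neq0 h1)); rewrite mulrBl mulVf ?lt0r_neq0 // mulfVK ?lt0r_neq0 //; lra.
lra.
Qed.


Lemma aux1 (R : realType) (s y : R) : 0 < s -> 0 <= y -> y <= 3^-1 -> - (s / (1 + y)) <= - (3 / 4 * s).
Proof.
move=> s0 y0 y1; rewrite lerN2 ler_pdivlMr; last lra.
have : s * y <= s * 3^-1 by rewrite ler_pM2l.
lra.
Qed.

Lemma aux2 (R : realType) (r y e : R) : 0 < r -> y / (1 + y) <= 1 - e ->
  1 - r * (1 - e) <= 1 + - (r * (y / (1 + y))).
Proof.
move=> r0 h; have : r * (y / (1 + y)) <= r * (1 - e) by rewrite ler_pM2l.
lra.
Qed.

Lemma numeric_contra (R : realType) (phi : R -> R) (r b p : R) :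
  0 < r -> 0 < b -> 0 < p ->
  (forall l, 0 < l -> 0 <= phi l) ->
  (forall l, 0 < l -> phi l <= phi (l / 2) ^+ 2) ->
  (forall l, 0 < l -> phi l <= 1 - r * (1 - expR (- (l * b)))) ->
  (forall l, 0 < l -> p * expR (- (l * (r * b / 2))) <= phi l) -> False.
Proof.
move=> r0 b0 p0 h0 hd hup hlow.
pose L := 4 * (`|ln p| + 1) / (r * b).
have rLb : r * L * b = 4 * (`|ln p| + 1).
  by rewrite /L; field; rewrite !lt0r_neq0.
have L0 : 0 < L.
  rewrite /L divr_gt0 ?mulr_gt0 //; have := normr_ge0 (ln p); lra.
clearbody L.
have Lb0 : 0 <= 3 * L * b by apply: mulr_ge0; [apply: mulr_ge0 => //; exact: ltW | exact: ltW].
pose k := Num.Def.archi_bound (3 * L * b).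
have hk : 3 * L * b <= 2 ^+ k.
  apply: (le_trans (ltW (archi_boundP Lb0))).
  by rewrite -natrX ler_nat ltnW // ltn_expl.
clearbody k.
pose N : R := 2 ^+ k.
have N0 : 0 < N by rewrite exprn_gt0.
have h1 := iter_dbl h0 hd k L0.
rewrite -/N in h1.
have hkN : 3 * L * b <= N by [].
have eN : 2 ^+ k = N by [].
clearbody N.
pose y := L / N * b.
have y0 : 0 <= y by rewrite /y; apply: mulr_ge0; [apply: divr_ge0; apply: ltW | apply: ltW].
have y13 : y <= 3^-1.
  rewrite /y mulrAC ler_pdivrMr //.
  rewrite mulrC ler_pdivlMl //.
  by rewrite (mulrC b) mulrA.
have eyN : N * y = L * b by rewrite /y mulrCA mulrA mulfVK // lt0r_neq0.
have hup' := hup _ (divr_gt0 L0 N0).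
have eLN : L / N * b = y by [].
rewrite eLN in hup'.
clearbody y.
have hy : phi (L / N) <= expR (- (r * (y / (1 + y)))).
  apply: (le_trans hup'); apply: (le_trans _ (expR_ge1Dx _)).
  exact: aux2 (one_sub_expN y0).
have h2 : phi (L / N) ^+ (2 ^ k) <= expR (- (r * (y / (1 + y)))) ^+ (2 ^ k).
  by rewrite lerXn2r ?nnegrE ?h0 ?expR_ge0 // divr_gt0.
rewrite -expRM_natl natrX eN in h2.
have h3 := hlow L L0.
have e1 : N * - (r * (y / (1 + y))) <= - (3 / 4 * (r * L * b)).
  have -> : N * - (r * (y / (1 + y))) = - ((r * L * b) / (1 + y)).
    rewrite mulrN; congr (- _); rewrite mulrCA [N * (y / _)]mulrA eyN; ring.
  by apply: aux1 => //; apply: mulr_gt0; [exact: mulr_gt0 | exact: b0].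
have h4 : p * expR (- (L * (r * b / 2))) <= expR (- (3 / 4 * (r * L * b))).
  apply: (le_trans h3); apply: (le_trans h1); apply: (le_trans h2).
  rewrite ler_expR; exact: e1.
have eL : L * (r * b / 2) = (r * L * b) / 2 by ring.
rewrite eL rLb in h4.
have hlt : expR (- (`|ln p| + 1)) < p.
  rewrite -[X in _ < X]lnK ?posrE // ltr_expR.
  have := ler_norm (- ln p); rewrite normrN; lra.
move: h4 hlt; move: (`|ln p| + 1) => q h4 hlt.
have e2 : expR (- (3 / 4 * (4 * q))) = expR (- q) * expR (- (4 * q / 2)).
  by rewrite -expRD; congr expR; field.
rewrite e2 ler_pM2r ?expR_gt0 // in h4.
lra.
Qed.
Lemma le_of_exp_delta (R : realType) (l a c : R) : 0 < l -> 0 <= a ->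
  (forall del, 0 < del -> expR (- (l * del)) * a <= c) -> a <= c.
Proof.
move=> l0 a0 h; rewrite leNgt; apply/negP => ca.
have apos : 0 < a.
  rewrite lt_neqAle a0 andbT; apply/eqP => a00; have := h 1 ltr01; rewrite -a00 mulr0; lra.
pose q := c / a.
have qa : q * a = c by rewrite /q mulfVK // lt0r_neq0.
have [q0|qpos] := lerP q 0.
  have := h 1 ltr01; rewrite -qa => h1.
  have : 0 < expR (- (l * 1)) * a by rewrite mulr_gt0 // expR_gt0.
  have : q * a <= 0 by rewrite pmulr_lle0.
  lra.
have q1 : q < 1 by rewrite /q ltr_pdivrMr // mul1r.
have lnq : ln q < 0 by rewrite ln_lt0 // qpos q1.
pose del := - ln q / (2 * l).
have del0 : 0 < del by rewrite /del divr_gt0 ?mulr_gt0 // oppr_gt0.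
have := h del del0.
have -> : - (l * del) = ln q / 2.
  by rewrite /del; field; rewrite lt0r_neq0.
have : q < expR (ln q / 2).
  rewrite -[X in X < _]lnK ?posrE // ltr_expR; lra.
move=> hq hle.
have : q * a < expR (ln q / 2) * a by rewrite ltr_pM2r.
lra.
Qed.

Section levels.
Context (R : realType) (d : measure_display) (T : measurableType d)
  (P : probability T R) (X : {RV P >-> R}).

Lemma aux3 (x m z : R) : z < m - x -> x <= m - z. Proof. move=> h; lra. Qed.
Lemma aux4 (x m z : R) : z < x - m -> m + z <= x. Proof. move=> h; lra. Qed.

Lemma arch_nat (x : R) : exists k : nat, x < k%:R.
Proof.
exists (Num.Def.archi_bound `|x|).
exact: le_lt_trans (ler_norm x) (archi_boundP (normr_ge0 x)).
Qed.

Lemma le_pre_ray (s s' : R) : s <= s' ->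
  (P (X @^-1` `]-oo, s]) <= P (X @^-1` `]-oo, s']))%E.
Proof.
move=> ss'; apply: le_measure; rewrite ?inE; try exact: measurable_funPTI.
by move=> w /=; rewrite !in_itv /= => h; exact: le_trans h ss'.
Qed.

Lemma levels : {ae P, forall w, 0 <= X w} -> ~ degenerate X ->
  exists m b : R, [/\ 0 < b, P (X @^-1` `]-oo, m[) = 0%E,
    (0 < P (X @^-1` `[(m + b)%R, +oo[))%E &
    forall t, 0 < t -> (0 < P (X @^-1` `]-oo, (m + t)%R]))%E].
Proof.
move=> H0 Hnd.
have H0' : P.-negligible (~` [set w | 0 <= X w]) := H0.
have mpre (s : R) : measurable (X @^-1` `]-oo, s]) by exact: measurable_funPTI.
pose S := [set s : R | P (X @^-1` `]-oo, s]) = 0%E].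
have Sm1 : S (-1).
  apply/(negligibleP _ (mpre _)); apply: negligibleS H0' => w /=.
  rewrite in_itv /= => Xw; apply/negP; rewrite -ltNge; lra.
have [s0 ns0] : exists s0, ~ S s0.
  apply/not_existsP => allS.
  have : P.-negligible (\bigcup_k (X @^-1` `]-oo, (k%:R : R)])).
    apply: negligible_bigcup => k; apply/(negligibleP _ (mpre _)).
    by have := allS k%:R => /contrapT.
  move=> /negligibleS => /(_ setT) hT.
  have : P.-negligible [set: T].
    apply: hT => w _; have [k hk] := arch_nat (X w).
    by exists k => //=; rewrite in_itv /= ltW.
  move/(negligibleP _ measurableT) => h1; have := probability_setT P; rewrite h1 => /eqP.
  by rewrite eq_sym onee_eq0.
have ubS : forall s, S s -> s <= s0.
  move=> s Ss; rewrite leNgt; apply/negP => s0s; apply: ns0.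
  apply/eqP; rewrite eq_le measure_ge0 andbT -Ss.
  by apply: le_pre_ray; rewrite ltW.
have hS : has_sup S by split; [exists (-1) | exists s0].
pose m := sup S.
have key : forall s, s < m -> P (X @^-1` `]-oo, s]) = 0%E.
  move=> s sm; have ms0 : 0 < m - s by rewrite subr_gt0.
  have [e Se he] := sup_adherent ms0 hS.
  apply/eqP; rewrite eq_le measure_ge0 andbT -Se.
  apply: le_pre_ray; rewrite -/m in he; apply: ltW; lra.
have pos : forall t, 0 < t -> (0 < P (X @^-1` `]-oo, (m + t)%R]))%E.
  move=> t t0; rewrite lt_neqAle measure_ge0 andbT; apply/eqP => h0.
  have Smt : S (m + t) by exact: esym h0.
  have := sup_upper_bound hS Smt; rewrite -/m; lra.
clearbody m.
have inv_lt (x : R) : 0 < x -> exists k : nat, k.+1%:R^-1 < x.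
  move=> x0; have [k hk] := arch_nat x^-1; exists k.
  rewrite -[x]invrK ltf_pV2 ?posrE ?invr_gt0 ?ltr0n //.
  by apply: (lt_le_trans hk); rewrite ler_nat.
have neg1 : P.-negligible (X @^-1` `]-oo, m[).
  apply: (negligibleS _ (negligible_bigcup
     (F := fun k : nat => X @^-1` `]-oo, (m - k.+1%:R^-1)%R]) _)).
  - move=> w /=; rewrite in_itv /= => hw.
    have [k hk] : exists k : nat, k.+1%:R^-1 < m - X w by apply: inv_lt; rewrite subr_gt0.
    by exists k => //=; rewrite in_itv /=; exact: aux3.
  - move=> k; apply/(negligibleP _ (mpre _)); apply: key.
    by rewrite ltrBlDr ltrDl invr_gt0 ltr0n.
have m1 : P (X @^-1` `]-oo, m[) = 0%E.
  exact/(negligibleP _ (measurable_funPTI X (measurable_itv _))).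
suff [b [b0 hb]] : exists b, 0 < b /\ (0 < P (X @^-1` `[(m + b)%R, +oo[))%E.
  by exists m, b; split.
apply: contrapT => hno; apply: Hnd; exists m.
have neg2 : P.-negligible (X @^-1` `]m, +oo[).
  apply: (negligibleS _ (negligible_bigcup
     (F := fun k : nat => X @^-1` `[(m + k.+1%:R^-1)%R, +oo[) _)).
  - move=> w /=; rewrite in_itv /= andbT => hw.
    have [k hk] : exists k : nat, k.+1%:R^-1 < X w - m by apply: inv_lt; rewrite subr_gt0.
    by exists k => //=; rewrite in_itv /= andbT; exact: aux4.
  - move=> k; apply/(negligibleP _ (measurable_funPTI X (measurable_itv _))).
    have hn : ~ (0 < P (X @^-1` `[(m + k.+1%:R^-1)%R, +oo[))%E.
      by move=> h; apply: hno; exists k.+1%:R^-1; split => //; rewrite invr_gt0 ltr0n.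
    by apply/eqP; rewrite eq_le measure_ge0 andbT leNgt; apply/negP.
have mA : measurable (X @^-1` [set m]) by exact: measurable_funPTI.
have negC : P.-negligible (~` (X @^-1` [set m])).
  apply: negligibleS (negligibleU neg1 neg2) => w /= hw.
  have : X w != m by apply/eqP.
  by rewrite neq_lt => /orP[h|h]; [left|right]; rewrite /= in_itv /= ?andbT.
have := probability_setT P; rewrite -(setUv (X @^-1` [set m])) measureU //.
- by rewrite (negligibleP _ (measurableC mA)).1 // adde0.
- exact: measurableC.
- exact: setICr.
Qed.
End levels.

Definition gexp (R : realType) (l m x : R) := expR (- (l * (x - m))).

Lemma measurable_gexp (R : realType) (l m : R) : measurable_fun setT (gexp l m).
Proof.
apply: measurableT_comp; first exact: measurable_expR.
have -> : (fun x : R => - (l * (x - m))) = (fun x => (- l) * x + l * m).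
  by apply/funext => x; ring.
apply: measurable_funD; last exact: measurable_cst.
by apply: measurable_funM; [exact: measurable_cst | exact: measurable_id].
Qed.

Lemma gexp_gt (R : realType) (l m r u : R) : 0 < l -> 0 < r ->
  (r < gexp l m u) = (u < m - ln r / l).
Proof.
move=> l0 r0; rewrite /gexp -[X in X < _]lnK ?posrE // ltr_expR.
have -> : (u < m - ln r / l) = (l * u < l * m - ln r).
  by rewrite -(ltr_pM2l l0) mulrBr [l * (ln r / l)]mulrC mulfVK ?lt0r_neq0.
by apply/idP/idP => h; lra.
Qed.

Section gexpRV.
Context (R : realType) (d : measure_display) (T : measurableType d) (P : probability T R)
  (U : {RV P >-> R}) (l m : R).
Definition gU := fun w => gexp l m (U w).
Lemma mgU : measurable_fun setT gU.
Proof. exact: measurableT_comp (measurable_gexp l m) (measurable_funP U). Qed.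
HB.instance Definition _ := isMeasurableFun.Build _ _ _ _ gU mgU.
End gexpRV.

Lemma cmp (R : realType) (d1 : measure_display) (T1 : measurableType d1) (P1 : probability T1 R)
  (d2 : measure_display) (T2 : measurableType d2) (P2 : probability T2 R)
  (U1 : {RV P1 >-> R}) (U2 : {RV P2 >-> R}) (l m del : R) :
  0 < l -> 0 < del ->
  (forall t, P1 (U1 @^-1` `]-oo, t]) <= P2 (U2 @^-1` `]-oo, t]))%E ->
  ('E_P1[gU U1 l (m - del)] <= 'E_P2[gU U2 l m])%E.
Proof.
move=> l0 d0 hst.
rewrite (@ge0_expectation_ccdf _ _ _ P1 (gU U1 l (m - del))); last by move=> w; exact: expR_ge0.
rewrite (@ge0_expectation_ccdf _ _ _ P2 (gU U2 l m)); last by move=> w; exact: expR_ge0.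
apply: ge0_le_integral => //.
- by apply: measurable_funTS; exact: ccdf_measurable.
- by apply: measurable_funTS; exact: ccdf_measurable.
move=> r; rewrite /= in_itv /= andbT => r0.
rewrite /ccdf /distribution /pushforward /=.
have [r00|rpos] := eqVneq r 0.
  have hT (d' : measure_display) (T' : measurableType d') (Q : probability T' R)
      (V : {RV Q >-> R}) (mm : R) : gU V l mm @^-1` `]r, +oo[ = setT.
    by apply/seteqP; split => // w _; rewrite /= in_itv /= andbT r00; exact: expR_gt0.
  by rewrite !hT !probability_setT.
have r1 : 0 < r by rewrite lt_neqAle eq_sym rpos.
pose c := m - ln r / l.
apply: (@le_trans _ _ (P1 (U1 @^-1` `]-oo, (c - del)%R]))).
  apply: le_measure; rewrite ?inE; try exact: measurable_funPTI.
  move=> w /=; rewrite !in_itv /= andbT /gU gexp_gt // => h.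
  by apply: ltW; rewrite /c; move: h; rewrite -!addrA (addrC (- del)).
apply: (le_trans (hst _)).
apply: le_measure; rewrite ?inE; try exact: measurable_funPTI.
move=> w /=; rewrite !in_itv /= andbT /gU gexp_gt // => h.
by apply: (le_lt_trans h); rewrite /c ltrBlDr ltrDl.
Qed.

Lemma half_split (R : realType) (l m a b : R) :
  - (l * ((a + b) / 2 - m)) = - (l / 2 * (a - m)) + - (l / 2 * (b - m)).
Proof. by field. Qed.

Section prod.
Context (R : realType) (d : measure_display) (T : measurableType d)
  (P : probability T R) (X : {RV P >-> R}).

Definition QQ : probability (T * T)%type R := (P \x P)%E.

Definition X1 : (T * T)%type -> R := fun w => X w.1.
Definition X2 : (T * T)%type -> R := fun w => X w.2.
Lemma mX1 : measurable_fun setT X1. Proof. exact: measurableT_comp. Qed.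
Lemma mX2 : measurable_fun setT X2. Proof. exact: measurableT_comp. Qed.
HB.instance Definition _ := isMeasurableFun.Build _ _ _ _ X1 mX1.
HB.instance Definition _ := isMeasurableFun.Build _ _ _ _ X2 mX2.

Definition Zavg : (T * T)%type -> R := fun w => (X w.1 + X w.2) / 2.
Lemma mZavg : measurable_fun setT Zavg.
Proof.
apply: measurable_funM; last exact: measurable_cst.
by apply: measurable_funD; [exact: mX1 | exact: mX2].
Qed.
HB.instance Definition _ := isMeasurableFun.Build _ _ _ _ Zavg mZavg.

Definition Yv : 'I_2 -> {RV QQ >-> R} := fun i => if i == ord0 then (X1 : {RV QQ >-> R}) else (X2 : {RV QQ >-> R}).

Lemma QQ_rect (A B : set T) : measurable A -> measurable B ->
  QQ (A `*` B) = (P A * P B)%E.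
Proof. by move=> mA mB; exact: product_measure1E. Qed.

Lemma same_Yv i : same_distribution X (Yv i).
Proof.
move=> A mA; rewrite /Yv; case: ifP => _.
- have -> : X1 @^-1` A = (X @^-1` A) `*` setT.
    by apply/seteqP; split => [[w1 w2] h|[w1 w2] [h _]].
  by rewrite QQ_rect ?probability_setT ?mule1 //; exact: measurable_funPTI.
- have -> : X2 @^-1` A = setT `*` (X @^-1` A).
    by apply/seteqP; split => [[w1 w2] h|[w1 w2] [_ h]].
  by rewrite QQ_rect ?probability_setT ?mul1e //; exact: measurable_funPTI.
Qed.

Lemma indep_Yv : mutually_independent Yv.
Proof.
move=> B mB.
pose i1 : 'I_2 := @Ordinal 2 1 isT.
have -> : \bigcap_i (Yv i @^-1` B i) = (X @^-1` B ord0) `*` (X @^-1` B i1).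
  apply/seteqP; split.
  - by move=> [w1 w2] H; split; [exact: (H ord0 I) | exact: (H i1 I)].
  - move=> [w1 w2] [h1 h2] i _.
    have : (i == ord0) || (i == i1) by case: i => [[|[|k]] hk].
    by case/orP => /eqP ->.
rewrite QQ_rect; try exact: measurable_funPTI.
rewrite big_ord_recl big_ord1.
rewrite -(same_Yv ord0 (mB ord0)) -(same_Yv i1 (mB i1)).
by have -> : lift ord0 ord0 = i1 by apply: val_inj.
Qed.

Lemma stoch_Z : in_Dplus X ->
  forall t, (P (X @^-1` `]-oo, t]) <= QQ (Zavg @^-1` `]-oo, t]))%E.
Proof.
move=> HD t.
have hs : \sum_(i < 2) (2^-1 : R) = 1.
  by rewrite big_ord_recl big_ord1; field.
have h0 : forall i : 'I_2, 0 <= (2^-1 : R) by move=> _; rewrite invr_ge0 ler0n.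
have h := HD 1%N (fun _ => 2^-1) h0 hs _ _ QQ Yv indep_Yv same_Yv t.
rewrite (same_Yv ord0) in h; last exact: measurable_itv.
have e : (fun w => \sum_(i < 2) 2^-1 * Yv i w) = Zavg.
  apply/funext => w; rewrite big_ord_recl big_ord1 /=.
  by rewrite /Zavg /X1 /X2 /= mulrDl mulrC (mulrC (X w.2)).
by rewrite -e.
Qed.

Lemma gZ_split (l m : R) (z : (T * T)%type) :
  gU (Zavg : {RV QQ >-> R}) l m z = gU X (l / 2) m z.1 * gU X (l / 2) m z.2.
Proof.
rewrite /gU /gexp /Zavg -expRD; congr expR; exact: half_split.
Qed.

Lemma E_Zavg (l m : R) :
  ('E_QQ[gU (Zavg : {RV QQ >-> R}) l m] = 'E_P[gU X (l / 2) m] * 'E_P[gU X (l / 2) m])%E.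
Proof.
rewrite !expectation_def.
have mg : measurable_fun setT (fun w => (gU X (l / 2) m w)%:E).
  by apply/measurable_EFinP; exact: mgU.
have g0 : forall w, (0 <= (gU X (l / 2) m w)%:E)%E by move=> w; rewrite lee_fin expR_ge0.
transitivity (\int[(P \x P)%E]_z ((gU X (l/2) m z.1)%:E * (gU X (l/2) m z.2)%:E))%E.
  by apply: eq_integral => z _; rewrite -EFinM -gZ_split.
rewrite fubini_tonelli1 /=; last 2 first.
- apply: emeasurable_funM.
  + exact: measurableT_comp mg measurable_fst.
  + exact: measurableT_comp mg measurable_snd.
- by move=> z; apply: mule_ge0.
rewrite /fubini_F /=.
under eq_integral do rewrite ge0_integralZl //.
by rewrite ge0_integralZr // integral_ge0.
Qed.
End prod.

Ltac side := first [ by apply/measurable_EFinP; exact: mgU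
  | by apply/measurable_EFinP; exact: measurable_indic
  | by move=> ? _; rewrite lee_fin ?mulr_ge0 ?expR_ge0
  | by rewrite lee_fin expR_ge0
  | by apply/measurable_EFinP; apply: measurable_funM;
      [exact: measurable_cst | exact: measurable_indic] ].

Section final.
Context (R : realType) (d : measure_display) (T : measurableType d)
  (P : probability T R) (X : {RV P >-> R}).

Lemma F4 (m l : R) : 0 < l -> in_Dplus X -> forall del, 0 < del ->
  ('E_P[gU X l (m - del)] <= 'E_P[gU X (l / 2) m] * 'E_P[gU X (l / 2) m])%E.
Proof. by move=> l0 HD del d0; rewrite -E_Zavg; exact: cmp l0 d0 (stoch_Z HD). Qed.

Lemma Eshift (m l del : R) :
  ('E_P[gU X l (m - del)] = (expR (- (l * del)))%:E * 'E_P[gU X l m])%E.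
Proof.
rewrite !expectation_def -ge0_integralZl //; try side.
apply: eq_integral => w _; rewrite -EFinM; congr EFin.
by rewrite /gU /gexp -expRD; congr expR; ring.
Qed.

Lemma F2 (m l b r : R) : 0 < l -> 0 <= b ->
  P (X @^-1` `]-oo, m[) = 0%E ->
  P (X @^-1` `[(m + b)%R, +oo[) = r%:E ->
  ('E_P[gU X l m] <= (1 - r * (1 - expR (- (l * b))))%:E)%E.
Proof.
move=> l0 b0 hm hA.
set A := X @^-1` `[(m + b)%R, +oo[.
have mA : measurable A by exact: measurable_funPTI.
have mAc : measurable (~` A) by exact: measurableC.
set e := expR (- (l * b)).
rewrite expectation_def.
apply: (@le_trans _ _ (\int[P]_w ((e * \1_A w)%:E + (\1_(~` A) w)%:E))%E).
  apply: ae_ge0_le_integral => //.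
  - by move=> w _; rewrite lee_fin expR_ge0.
  - by apply/measurable_EFinP; exact: mgU.
  - move=> w _; apply: adde_ge0; rewrite lee_fin ?mulr_ge0 ?expR_ge0 //.
  - apply: emeasurable_funD; apply/measurable_EFinP.
    + by apply: measurable_funM; [exact: measurable_cst | exact: measurable_indic].
    + exact: measurable_indic.
  - exists (X @^-1` `]-oo, m[); split => //; first exact: measurable_funPTI.
    move=> w /= hw; rewrite in_itv /= ltNge; apply/negP => hmw; apply: hw => _.
    rewrite -EFinD lee_fin /gU /gexp !indicE.
    have [wA|wA] := boolP (w \in A).
    + rewrite in_setC wA /= mulr1 addr0 /e ler_expR lerN2 ler_pM2l //.
      move: wA; rewrite inE /A /= in_itv /= andbT; lra.
    + rewrite in_setC wA /= mulr0 add0r expR_le1 oppr_le0.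
      by apply: mulr_ge0; [exact: ltW | rewrite subr_ge0].
rewrite ge0_integralD //; try side.
under eq_integral do rewrite EFinM.
rewrite ge0_integralZl //; try side.
have hC : (\int[P]_x (\1_(~` A) x)%:E = 1 - r%:E)%E.
  by rewrite integral_indic // setIT -hA; exact: probability_setC mA.
have hA' : (\int[P]_x (\1_A x)%:E = r%:E)%E.
  by rewrite integral_indic // setIT; exact: hA.
rewrite hC hA'.
rewrite -EFinM -EFinB -EFinD lee_fin; lra.
Qed.

Lemma F3 (m l t p : R) : 0 < l ->
  P (X @^-1` `]-oo, (m + t)%R]) = p%:E ->
  ((p * expR (- (l * t)))%:E <= 'E_P[gU X l m])%E.
Proof.
move=> l0 hB.
set B := X @^-1` `]-oo, (m + t)%R].
have mB : measurable B by exact: measurable_funPTI.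
set e := expR (- (l * t)).
have -> : ((p * e)%:E = \int[P]_w (e * \1_B w)%:E)%E.
  under eq_integral do rewrite EFinM.
  rewrite ge0_integralZl //; try side.
  by rewrite integral_indic // setIT mulrC EFinM -hB.
rewrite expectation_def; apply: ge0_le_integral => //.
- by move=> w _; rewrite lee_fin mulr_ge0 ?expR_ge0.
- apply/measurable_EFinP.
  by apply: measurable_funM; [exact: measurable_cst | exact: measurable_indic].
- by apply/measurable_EFinP; exact: mgU.
move=> w _; rewrite lee_fin /gU /gexp indicE.
have [wB|wB] := boolP (w \in B).
- rewrite mulr1 /e ler_expR lerN2 ler_pM2l //.
  move: wB; rewrite inE /B /= in_itv /=; lra.
- by rewrite mulr0 expR_ge0.
Qed.
End final.

Unset Implicit Arguments.
Theorem mainTheorem10 (R : realType) (d : measure_display) (T : measurableType d)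
    (P : probability T R) (X : {RV P >-> R}) :
  {ae P, forall w, 0 <= X w} -> ~ degenerate X -> ~ in_Dplus X.
Proof.
move=> H0 Hnd HD.
have [m [b [b0 hm hb hpos]]] := levels H0 Hnd.
have mA : measurable (X @^-1` `[(m + b)%R, +oo[) by exact: measurable_funPTI.
pose r := fine (P (X @^-1` `[(m + b)%R, +oo[)).
have hA : P (X @^-1` `[(m + b)%R, +oo[) = r%:E by rewrite /r fineK // fin_num_measure.
have r0 : 0 < r by rewrite -lte_fin -hA.
pose t := r * b / 2.
have t0 : 0 < t by rewrite /t divr_gt0 // mulr_gt0.
have mB : measurable (X @^-1` `]-oo, (m + t)%R]) by exact: measurable_funPTI.
pose p := fine (P (X @^-1` `]-oo, (m + t)%R])).
have hB : P (X @^-1` `]-oo, (m + t)%R]) = p%:E by rewrite /p fineK // fin_num_measure.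
have p0 : 0 < p by rewrite -lte_fin -hB; exact: hpos.
pose phi l := fine ('E_P[gU X l m])%E.
have E0 : forall l, (0 <= 'E_P[gU X l m])%E.
  by move=> l; rewrite expectation_def; apply: integral_ge0 => w _; rewrite lee_fin expR_ge0.
have Efin : forall l, 0 < l -> ('E_P[gU X l m] = (phi l)%:E)%E.
  move=> l l0; rewrite /phi fineK // ge0_fin_numE //.
  exact: le_lt_trans (F2 l0 (ltW b0) hm hA) (ltey _).
apply: (@numeric_contra R phi r b p r0 b0 p0).
- by move=> l l0; rewrite /phi fine_ge0.
- move=> l l0; apply: (le_of_exp_delta l0); first by rewrite /phi fine_ge0.
  move=> del d0; have := F4 m l0 HD d0.
  have l20 : 0 < l / 2 by rewrite divr_gt0.
  by rewrite Eshift !Efin // -!EFinM lee_fin expr2.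
- by move=> l l0; rewrite -lee_fin -Efin //; exact: F2 l0 (ltW b0) hm hA.
- by move=> l l0; rewrite -lee_fin -Efin //; exact: F3 l0 hB.
Qed.
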